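(* Let $G$ be a word hyperbolic group and $0\to\mathbb Z\xrightarrow{\iota}E\xrightarrow{\pi}G\to1$ a central extension. Let $X$ be a finite set with a map to $E$ whose image is a symmetric generating set of $E$; write $\overline w\in E$ for the evaluation of $w\in X^*$ and $\pi(\overline w)$ for its image in $G$. Then there exists $C>0$ (an integer) such that for every $g\in G$ the maximum $$\max\{\overline w\,\iota(-C\,\mathrm{len}(w)) : w\in X^*,\ \pi(\overline w)=g\}$$ exists with respect to the natural total order on the fibre $\pi^{-1}(g)$. Moreover, there then exists $\lambda>0$ such that every word $w$ achieving this maximum defines a $(\lambda,0)$-quasigeodesic path in the Cayley graph of $G$ with respect to the generating set $\pi(\overline X)$.
   Context: The total order on a fibre $\pi^{-1}(g)$: for $h_1,h_2\in\pi^{-1}(g)$, $h_1\le h_2$ iff $h_2h_1^{-1}=\iota(n)$ with $n\ge 0$. A word $w=x_1\cdots x_n$ defines the path in the Cayley graph of $G$ through the vertices $\pi(\overline{x_1\cdots x_t})$, $t=0,\dots,n$. *)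

(* Defs.v *)
From Stdlib Require Import Reals ZArith List Lia.
Set Implicit Arguments.

Record Group := {
  carrier :> Type;
  gmul : carrier -> carrier -> carrier;
  ginv : carrier -> carrier;
  gone : carrier;
  gmulA : forall a b c, gmul a (gmul b c) = gmul (gmul a b) c;
  gmul1l : forall a, gmul gone a = a;
  gmul1r : forall a, gmul a gone = a;
  gmulVl : forall a, gmul (ginv a) a = gone;
  gmulVr : forall a, gmul a (ginv a) = gone
}.

Arguments gmul {g}. Arguments ginv {g}. Arguments gone {g}.

Definition is_hom {G H : Group} (f : G -> H) : Prop :=
  forall a b, f (gmul a b) = gmul (f a) (f b).

Definition evalw {G : Group} {X : Type} (f : X -> G) (w : list X) : G :=
  fold_right (fun x acc => gmul (f x) acc) gone w.

Definition dist {G : Group} (S : list G) (a b : G) (n : nat) : Prop :=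
  (exists u : list G, Forall (fun s => In s S) u /\ length u = n /\
                       evalw (fun s => s) u = gmul (ginv a) b) /\
  (forall u : list G, Forall (fun s => In s S) u ->
     evalw (fun s => s) u = gmul (ginv a) b -> (n <= length u)%nat).

Definition generates {G : Group} (S : list G) : Prop :=
  forall g : G, exists u : list G, Forall (fun s => In s S) u /\
                               evalw (fun s => s) u = g.

Definition symmetric_list {G : Group} (S : list G) : Prop :=
  forall s, In s S -> In (ginv s) S.

(* Gromov hyperbolicity (four-point condition on Gromov products) of the
   word metric of G w.r.t. some finite symmetric generating set. *)
Definition word_hyperbolic (G : Group) : Prop :=
  exists (S : list G) (delta : R),
    generates S /\ symmetric_list S /\ (0 <= delta)%R /\
    forall (w x y z : G) (dwx dwy dwz dxy dyz dxz : nat),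
      dist S w x dwx -> dist S w y dwy -> dist S w z dwz ->
      dist S x y dxy -> dist S y z dyz -> dist S x z dxz ->
      let gp := fun (a b c : nat) => ((INR a + INR b - INR c) / 2)%R in
      (gp dwx dwz dxz >= Rmin (gp dwx dwy dxy) (gp dwy dwz dyz) - delta)%R.

Definition central_extension {E G : Group} (iota : Z -> E) (pi : E -> G) : Prop :=
  (forall a b : Z, iota (a + b)%Z = gmul (iota a) (iota b)) /\
  (forall a b : Z, iota a = iota b -> a = b) /\
  (forall (n : Z) (e : E), gmul (iota n) e = gmul e (iota n)) /\
  is_hom (G:=E) (H:=G) pi /\
  (forall g : G, exists e : E, pi e = g) /\
  (forall e : E, pi e = gone <-> exists n : Z, e = iota n).

Definition fibre_le {E : Group} (iota : Z -> E) (h1 h2 : E) : Prop :=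
  exists n : Z, (0 <= n)%Z /\ gmul h2 (ginv h1) = iota n.

Definition shifted_value {E : Group} {X : Type} (f : X -> E) (iota : Z -> E)
  (C : Z) (w : list X) : E :=
  gmul (evalw f w) (iota (- C * Z.of_nat (length w))%Z).

Definition is_max_word {E G : Group} {X : Type} (f : X -> E) (iota : Z -> E)
  (pi : E -> G) (C : Z) (g : G) (w : list X) : Prop :=
  pi (evalw f w) = g /\
  forall w' : list X, pi (evalw f w') = g ->
    fibre_le iota (shifted_value f iota C w') (shifted_value f iota C w).

(* Distances in G are
   word lengths over the letters of X (mapped by pi o f). *)
Definition quasigeodesic_word {E G : Group} {X : Type} (f : X -> E)
  (pi : E -> G) (lambda : R) (w : list X) : Prop :=
  let p := fun t : nat => pi (evalw f (firstn t w)) in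
  forall s t : nat, (s <= length w)%nat -> (t <= length w)%nat ->
    let dst := INR (Nat.max s t - Nat.min s t) in
    (forall u : list X, pi (evalw f u) = gmul (ginv (p s)) (p t) ->
        (dst / lambda <= INR (length u))%R) /\
    (exists u : list X, pi (evalw f u) = gmul (ginv (p s)) (p t) /\
        (INR (length u) <= lambda * dst)%R).

(* Main.v *)
Require Import Defs.
From Stdlib Require Import Reals ZArith List Lia Lra Classical ClassicalEpsilon.
Import ListNotations.

Lemma gcancel_l (G : Group) (a b c : G) : gmul a b = gmul a c -> b = c.
Proof.
  intro H. rewrite <- (gmul1l G b), <- (gmul1l G c), <- (gmulVl G a), <- !gmulA, H.
  reflexivity.
Qed.

Lemma gcancel_r (G : Group) (a b c : G) : gmul b a = gmul c a -> b = c.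
Proof.
  intro H. rewrite <- (gmul1r G b), <- (gmul1r G c), <- (gmulVr G a), !gmulA, H.
  reflexivity.
Qed.

Lemma ginv_unique (G : Group) (a b : G) : gmul a b = gone -> b = ginv a.
Proof.
  intro H. apply (gcancel_l G a). rewrite H, gmulVr. reflexivity.
Qed.

Lemma ginv_mul (G : Group) (a b : G) : ginv (gmul a b) = gmul (ginv b) (ginv a).
Proof.
  symmetry. apply ginv_unique.
  rewrite <- gmulA, (gmulA G b), gmulVr, gmul1l, gmulVr. reflexivity.
Qed.

Lemma ginv_one (G : Group) : ginv (gone : G) = gone.
Proof. symmetry. apply ginv_unique. apply gmul1l. Qed.

Lemma ginv_inv (G : Group) (a : G) : ginv (ginv a) = a.
Proof. symmetry. apply ginv_unique. apply gmulVl. Qed.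

Lemma hom_one (G H : Group) (p : G -> H) : is_hom p -> p gone = gone.
Proof.
  intro Hp. apply (gcancel_l H (p gone)). rewrite <- Hp, !gmul1r. reflexivity.
Qed.

Lemma hom_inv (G H : Group) (p : G -> H) (a : G) : is_hom p -> p (ginv a) = ginv (p a).
Proof.
  intro Hp. apply ginv_unique. rewrite <- Hp, gmulVr. apply hom_one; auto.
Qed.

Lemma evalw_app (G : Group) (X : Type) (f : X -> G) (l1 l2 : list X) :
  evalw f (l1 ++ l2) = gmul (evalw f l1) (evalw f l2).
Proof.
  induction l1 as [|x l IH]; simpl.
  - rewrite gmul1l. reflexivity.
  - rewrite IH, gmulA. reflexivity.
Qed.

Lemma evalw_rev_inv (G : Group) (X : Type) (f : X -> G) (h : X -> X) (u : list X) :
  (forall x, f (h x) = ginv (f x)) -> evalw f (rev (map h u)) = ginv (evalw f u).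
Proof.
  intro Hh. induction u as [|x u IH]; simpl.
  - symmetry. apply ginv_one.
  - rewrite evalw_app, IH. simpl. rewrite gmul1r, Hh, ginv_mul. reflexivity.
Qed.

Lemma evalw_hom (G H : Group) (X : Type) (f : X -> G) (p : G -> H) (u : list X) :
  is_hom p -> p (evalw f u) = evalw (fun x => p (f x)) u.
Proof.
  intro Hp. induction u as [|x u IH]; simpl.
  - apply hom_one; auto.
  - rewrite Hp, IH. reflexivity.
Qed.

Lemma evalw_concat (G : Group) (X Y : Type) (f : X -> G) (tau : Y -> list X) (v : list Y) :
  evalw f (concat (map tau v)) = evalw (fun y => evalw f (tau y)) v.
Proof.
  induction v as [|y v IH]; simpl; auto.
  rewrite evalw_app, IH. reflexivity.
Qed.

Lemma decomp (A : Type) (w : list A) (s t : nat) : s <= t -> t <= length w ->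
  w = firstn s w ++ firstn (t - s) (skipn s w) ++ skipn (t - s) (skipn s w) /\
  length (firstn s w) = s /\ length (firstn (t - s) (skipn s w)) = t - s /\
  firstn t w = firstn s w ++ firstn (t - s) (skipn s w).
Proof.
  intros Hst Ht.
  assert (Hs : length (firstn s w) = s) by (apply firstn_length_le; lia).
  split; [|split; [exact Hs|split]].
  - rewrite !firstn_skipn. reflexivity.
  - apply firstn_length_le. rewrite length_skipn. lia.
  - rewrite <- (firstn_skipn s w) at 1.
    replace t with (length (firstn s w) + (t - s)) at 1 by lia.
    rewrite firstn_app_2. reflexivity.
Qed.

Lemma nat_min (P : nat -> Prop) : (exists k, P k) -> exists k, P k /\ forall k', P k' -> k <= k'.
Proof.
  intros [k Hk]. apply NNPP. intro Hno.
  assert (Hall : forall n k, k <= n -> ~ P k).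
  { induction n as [|n IH]; intros k0 Hk0 HP; apply Hno; exists k0; split; auto.
    - intros; lia.
    - intros k' Hk'. destruct (le_lt_dec k0 k'); auto. exfalso. apply (IH k'); auto; lia. }
  apply (Hall k k); auto.
Qed.

Lemma nat_max (P : nat -> Prop) (B : nat) : (exists k, P k) -> (forall k, P k -> k <= B) ->
  exists k, P k /\ forall k', P k' -> k' <= k.
Proof.
  intros [k Hk] HB.
  destruct (nat_min (fun i => i <= B /\ P (B - i))) as [i [[Hi HPi] Hmin]].
  { exists (B - k). split; [lia|]. replace (B - (B - k)) with k by (specialize (HB k Hk); lia). auto. }
  exists (B - i). split; auto. intros k' Hk'.
  specialize (HB k' Hk').
  assert (i <= B - k'). { apply Hmin. split; [lia|]. replace (B - (B - k')) with k' by lia. auto. }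
  lia.
Qed.

Lemma Z_max (P : Z -> Prop) (B : Z) : (exists z, P z) -> (forall z, P z -> (z <= B)%Z) ->
  exists z, P z /\ forall z', P z' -> (z' <= z)%Z.
Proof.
  intros [z Hz] HB.
  destruct (nat_min (fun i => P (B - Z.of_nat i)%Z)) as [i [HPi Hmin]].
  { exists (Z.to_nat (B - z)). specialize (HB z Hz).
    replace (B - Z.of_nat (Z.to_nat (B - z)))%Z with z by lia. auto. }
  exists (B - Z.of_nat i)%Z. split; auto. intros z' Hz'.
  specialize (HB z' Hz').
  assert (i <= Z.to_nat (B - z')).
  { apply Hmin. replace (B - Z.of_nat (Z.to_nat (B - z')))%Z with z' by lia. auto. }
  lia.
Qed.

Lemma fin_bound (A : Type) (L : list A) (P : A -> Z -> Prop) :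
  (forall x, In x L -> exists M, forall m, P x m -> (m <= M)%Z) ->
  exists M, forall x, In x L -> forall m, P x m -> (m <= M)%Z.
Proof.
  induction L as [|a L IH]; intro H.
  - exists 0%Z. intros x [].
  - destruct (H a (or_introl eq_refl)) as [Ma HMa].
    destruct IH as [ML HML]. { intros x Hx. apply H. right. auto. }
    exists (Z.max Ma ML). intros x [<-|Hx] m Hm.
    + specialize (HMa m Hm). lia.
    + specialize (HML x Hx m Hm). lia.
Qed.

Fixpoint words (T : Type) (L : list T) (k : nat) : list (list T) :=
  match k with
  | O => [[]]
  | S k => [] :: flat_map (fun s => map (cons s) (words T L k)) L
  end.
Arguments words {T} L k.

Lemma words_in (T : Type) (L : list T) (k : nat) (u : list T) :
  Forall (fun s => In s L) u -> length u <= k -> In u (words L k).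
Proof.
  revert u. induction k as [|k IH]; intros u Hu Hl.
  - destruct u; simpl in *; [auto|lia].
  - destruct u as [|x u]; simpl; [auto|]. right.
    inversion Hu; subst. apply in_flat_map. exists x. split; auto.
    apply in_map. apply IH; auto. simpl in Hl; lia.
Qed.

Lemma dist_exists (G : Group) (S : list G) (a b : G) : generates S -> exists n, Defs.dist S a b n.
Proof.
  intro HS. destruct (HS (gmul (ginv a) b)) as [u [Hu He]].
  destruct (nat_min (fun k => exists u, Forall (fun s => In s S) u /\ length u = k /\
                                evalw (fun s => s) u = gmul (ginv a) b)) as [k [Hk Hmin]].
  { exists (length u), u. auto. }
  exists k. split; auto. intros u' Hu' He'. apply Hmin. exists u'. auto.
Qed.

Lemma dist_le (G : Group) (S : list G) (a b : G) n u : Defs.dist S a b n ->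
  Forall (fun s => In s S) u -> evalw (fun s => s) u = gmul (ginv a) b -> n <= length u.
Proof. intros [_ H] Hu He. apply H; auto. Qed.

Lemma invS_forall (G : Group) (S : list G) u : symmetric_list S ->
  Forall (fun s => In s S) u -> Forall (fun s => In s S) (rev (map ginv u)).
Proof.
  intros Hsym Hu. apply Forall_rev. rewrite Forall_forall in *. intros x Hx.
  apply in_map_iff in Hx. destruct Hx as [y [<- Hy]]. apply Hsym. auto.
Qed.

Lemma sub_word (G : Group) (X : Type) (f : X -> G) (v : list X) (s t : nat) :
  s <= t -> t <= length v ->
  exists B, incl B v /\ length B = t - s /\
    evalw f B = gmul (ginv (evalw f (firstn s v))) (evalw f (firstn t v)).
Proof.
  intros Hst Ht. destruct (decomp X v s t Hst Ht) as [Hv [HA [HB Hft]]].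
  exists (firstn (t - s) (skipn s v)). split; [|split; auto].
  - intros x Hx. rewrite Hv. apply in_or_app. right. apply in_or_app. left. auto.
  - rewrite Hft, evalw_app, gmulA, gmulVl, gmul1l. reflexivity.
Qed.

Lemma incl_forall (T : Type) (P : T -> Prop) (B v : list T) : incl B v -> Forall P v -> Forall P B.
Proof. intros Hi Hv. rewrite Forall_forall in *. auto. Qed.

Lemma dehn (G : Group) (S : list G) (delta : R) :
  generates S -> symmetric_list S -> (0 <= delta)%R ->
  (forall (w x y z : G) (dwx dwy dwz dxy dyz dxz : nat),
      Defs.dist S w x dwx -> Defs.dist S w y dwy -> Defs.dist S w z dwz ->
      Defs.dist S x y dxy -> Defs.dist S y z dyz -> Defs.dist S x z dxz ->
      let gp := fun (a b c : nat) => ((INR a + INR b - INR c) / 2)%R in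
      (gp dwx dwz dxz >= Rmin (gp dwx dwy dxy) (gp dwy dwz dyz) - delta)%R) ->
  exists K : nat, forall v : list G, Forall (fun s => In s S) v ->
    evalw (fun s => s) v = gone -> v <> [] ->
    exists A B Cc u, v = A ++ B ++ Cc /\ length B <= K /\
      Forall (fun s => In s S) u /\ length u < length B /\
      evalw (fun s => s) u = evalw (fun s => s) B.
Proof.
  intros HS Hsym Hd H4.
  set (j := Z.to_nat (up (2 * delta))).
  assert (Hj : (2 * delta < INR j)%R).
  { destruct (archimed (2 * delta)) as [H1 _].
    assert (0 < up (2 * delta))%Z by (apply lt_IZR; lra).
    unfold j. rewrite INR_IZR_INZ, Z2Nat.id by lia. lra. }
  exists (2 * j). intros v Hv Hev Hne.
  set (ev := evalw (fun s : G => s)).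
  set (c := fun t => ev (firstn t v)).
  set (n := length v).
  assert (Hc0 : c 0 = gone) by reflexivity.
  assert (Hcn : c n = gone) by (unfold c, n; rewrite firstn_all; exact Hev).
  assert (Hsub : forall s t, s <= t -> t <= n -> exists B, Forall (fun s => In s S) B /\
             length B = t - s /\ ev B = gmul (ginv (c s)) (c t)).
  { intros s t Hst Htn. destruct (sub_word G G (fun s => s) v s t Hst Htn) as [B [HB1 [HB2 HB3]]].
    exists B. split; [eapply incl_forall; eauto|]. auto. }
  assert (Hdsub : forall s t d, s <= t -> t <= n -> Defs.dist S (c s) (c t) d -> d <= t - s).
  { intros s t d Hst Htn Hd'. destruct (Hsub s t Hst Htn) as [B [HB1 [HB2 HB3]]].
    rewrite <- HB2. eapply dist_le; eauto. }
  enough (Hidx : exists s t, s <= t /\ t <= n /\ t - s <= 2 * j /\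
             exists u, Forall (fun s => In s S) u /\ length u < t - s /\
               ev u = gmul (ginv (c s)) (c t)).
  { destruct Hidx as [s [t [Hst [Htn [HK [u [Hu [Hlu Heu]]]]]]]].
    destruct (decomp G v s t Hst Htn) as [Hv' [HA [HB Hft]]].
    exists (firstn s v), (firstn (t - s) (skipn s v)), (skipn (t - s) (skipn s v)), u.
    split; [exact Hv'|]. rewrite HB. split; [lia|]. split; [auto|]. split; [lia|].
    rewrite Heu. unfold c. rewrite Hft. unfold ev. rewrite evalw_app, gmulA, gmulVl, gmul1l.
    reflexivity. }
  assert (Hnpos : 0 < n) by (unfold n; destruct v; [congruence|simpl; lia]).
  destruct (le_lt_dec n (2 * j)) as [Hsmall|Hbig].
  { exists 0, n. split; [lia|]. split; [lia|]. split; [lia|].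
    exists []. split; [constructor|]. split; [simpl; lia|].
    rewrite Hc0, Hcn, ginv_one, gmul1l. reflexivity. }
  destruct (nat_max (fun D => exists t, t <= n /\ Defs.dist S (c 0) (c t) D) n) as [Dm [[m [Hmn HDm]] Hmax]].
  { destruct (dist_exists G S (c 0) (c 0) HS) as [d Hd0]. exists d, 0. split; [lia|auto]. }
  { intros k [t [Htn Hdt]]. specialize (Hdsub 0 t k ltac:(lia) Htn Hdt). lia. }
  destruct (le_lt_dec j Dm) as [HjD|HDj].
  2:{ destruct (dist_exists G S (c 0) (c j) HS) as [dj Hdj].
      assert (dj <= Dm) by (apply Hmax; exists j; split; [lia|auto]).
      destruct Hdj as [[u [Hu [Hlu Heu]]] _].
      exists 0, j. split; [lia|]. split; [lia|]. split; [lia|].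
      exists u. split; auto. split; [lia|auto]. }
  assert (HDm1 : Dm <= m) by (specialize (Hdsub 0 m Dm ltac:(lia) Hmn HDm); lia).
  assert (HDm2 : Dm <= n - m).
  { destruct (Hsub m n Hmn (le_n n)) as [B [HB1 [HB2 HB3]]].
    rewrite <- HB2, <- (length_map ginv B), <- length_rev.
    eapply dist_le; [exact HDm| apply invS_forall; auto|].
    unfold ev in HB3. rewrite (evalw_rev_inv G G (fun s => s) ginv B (fun x => eq_refl)), HB3.
    rewrite Hc0, Hcn, ginv_one, gmul1l, gmul1r, ginv_inv. reflexivity. }
  set (s := m - j). set (t := m + j).
  destruct (dist_exists G S (c s) (c t) HS) as [dxz Hdxz].
  destruct (le_lt_dec (2 * j) dxz) as [Hge|Hlt].
  2:{ destruct Hdxz as [[u [Hu [Hlu Heu]]] _].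
      exists s, t. unfold s, t. split; [lia|]. split; [lia|]. split; [lia|].
      exists u. split; auto. split; [lia|auto]. }
  exfalso.
  destruct (dist_exists G S (c 0) (c s) HS) as [a Ha].
  destruct (dist_exists G S (c 0) (c t) HS) as [b Hb].
  destruct (dist_exists G S (c s) (c m) HS) as [dxy Hdxy].
  destruct (dist_exists G S (c m) (c t) HS) as [dyz Hdyz].
  assert (a <= Dm) by (apply Hmax; exists s; split; [unfold s; lia|auto]).
  assert (b <= Dm) by (apply Hmax; exists t; split; [unfold t; lia|auto]).
  assert (dxy <= j) by (specialize (Hdsub s m dxy ltac:(unfold s; lia) Hmn Hdxy); unfold s in *; lia).
  assert (dyz <= j) by (specialize (Hdsub m t dyz ltac:(unfold t; lia) ltac:(unfold t; lia) Hdyz); unfold t in *; lia).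
  specialize (H4 _ _ _ _ _ _ _ _ _ _ Ha HDm Hb Hdxy Hdyz Hdxz). simpl in H4.
  apply le_INR in H, H0, H1, H2, Hge. rewrite mult_INR in Hge. simpl in Hge.
  unfold Rmin in H4. destruct (Rle_dec _ _) in H4; lra.
Qed.

Lemma ce_iota0 (G E : Group) (iota : Z -> E) (pi : E -> G) :
  central_extension iota pi -> iota 0%Z = gone.
Proof.
  intros [Hadd _]. apply (gcancel_l E (iota 0%Z)). rewrite <- Hadd, gmul1r. reflexivity.
Qed.

Lemma ce_same_pi (G E : Group) (iota : Z -> E) (pi : E -> G) (a b : E) :
  central_extension iota pi -> pi a = pi b -> exists m, a = gmul b (iota m).
Proof.
  intros [Hadd [Hinj [Hcen [Hpi [Hsurj Hker]]]]] Hab.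
  destruct (proj1 (Hker (gmul (ginv b) a))) as [m Hm].
  { rewrite Hpi, hom_inv, Hab, gmulVl; auto. }
  exists m. rewrite <- Hm, gmulA, gmulVr, gmul1l. reflexivity.
Qed.

Lemma ce_ker (G E : Group) (iota : Z -> E) (pi : E -> G) (a : E) :
  central_extension iota pi -> pi a = gone -> exists m, a = iota m.
Proof. intros [_ [_ [_ [_ [_ Hker]]]]] H. apply Hker; auto. Qed.

Lemma ce_inj (G E : Group) (iota : Z -> E) (pi : E -> G) a b :
  central_extension iota pi -> iota a = iota b -> a = b.
Proof. intros [_ [Hinj _]]. auto. Qed.

Lemma ce_add (G E : Group) (iota : Z -> E) (pi : E -> G) a b :
  central_extension iota pi -> iota (a + b)%Z = gmul (iota a) (iota b).
Proof. intros [Hadd _]. auto. Qed.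

Lemma ce_cen (G E : Group) (iota : Z -> E) (pi : E -> G) n e :
  central_extension iota pi -> gmul (iota n) e = gmul e (iota n).
Proof. intros [_ [_ [Hcen _]]]. auto. Qed.

Lemma ce_hom (G E : Group) (iota : Z -> E) (pi : E -> G) :
  central_extension iota pi -> is_hom pi.
Proof. intros [_ [_ [_ [Hpi _]]]]. auto. Qed.

Lemma ce_unique_bound (G E : Group) (iota : Z -> E) (pi : E -> G) (P : Z -> Prop) (a b : E) :
  central_extension iota pi ->
  exists M, forall m, a = gmul b (iota m) -> (m <= M)%Z.
Proof.
  intro CE. destruct (classic (exists m0, a = gmul b (iota m0))) as [[m0 Hm0]|Hno].
  - exists m0. intros m Hm. rewrite Hm in Hm0. apply gcancel_l in Hm0.
    apply (ce_inj G E iota pi) in Hm0; auto. lia.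
  - exists 0%Z. intros m Hm. exfalso. apply Hno. eauto.
Qed.

Lemma stepB (G E : Group) (iota : Z -> E) (pi : E -> G) (X : Type) (f : X -> E)
  (S : list G) (K : nat) (tau : G -> list X) :
  central_extension iota pi -> (forall g, pi (evalw f (tau g)) = g) ->
  (forall v : list G, Forall (fun s => In s S) v ->
    evalw (fun s => s) v = gone -> v <> [] ->
    exists A B Cc u, v = A ++ B ++ Cc /\ length B <= K /\
      Forall (fun s => In s S) u /\ length u < length B /\
      evalw (fun s => s) u = evalw (fun s => s) B) ->
  exists D, (0 <= D)%Z /\ forall v, Forall (fun s => In s S) v -> evalw (fun s => s) v = gone ->
    forall n, evalw f (concat (map tau v)) = iota n -> (n <= D * Z.of_nat (length v))%Z.
Proof.
  intros CE Htau Hdehn.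
  set (T := fun w => evalw f (concat (map tau w))).
  assert (HTapp : forall a b, T (a ++ b) = gmul (T a) (T b)).
  { intros a b. unfold T. rewrite map_app, concat_app, evalw_app. reflexivity. }
  assert (HTpi : forall w, pi (T w) = evalw (fun s => s) w).
  { induction w as [|y w IH]; unfold T in *; simpl.
    - apply hom_one. apply (ce_hom G E iota pi CE).
    - rewrite evalw_app, (ce_hom G E iota pi CE), Htau, IH. reflexivity. }
  destruct (fin_bound _ (list_prod (words S K) (words S K))
     (fun p m => T (fst p) = gmul (T (snd p)) (iota m))) as [M HM].
  { intros p _. apply (ce_unique_bound G E iota pi (fun _ => True)); auto. }
  exists (Z.max 0 M). split; [lia|].
  intros v. remember (length v) as len eqn:Hlen. revert v Hlen.
  induction len as [len IH] using (well_founded_induction lt_wf).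
  intros v Hlen Hv Hev n Hn.
  destruct v as [|y v0].
  - simpl in Hn. rewrite <- (ce_iota0 G E iota pi CE) in Hn.
    apply (ce_inj G E iota pi) in Hn; auto. subst. simpl. lia.
  - set (v := y :: v0) in *.
    destruct (Hdehn v Hv Hev ltac:(discriminate)) as [A [B [Cc [u [Hvd [HBK [Hu [Hlu Heu]]]]]]]].
    set (v' := A ++ u ++ Cc).
    assert (Hv' : Forall (fun s => In s S) v').
    { rewrite Hvd in Hv. apply Forall_app in Hv. destruct Hv as [HA HBC].
      apply Forall_app in HBC. destruct HBC as [HB HC].
      unfold v'. apply Forall_app. split; auto. apply Forall_app. split; auto. }
    assert (Hev' : evalw (fun s => s) v' = gone).
    { rewrite <- Hev, Hvd. unfold v'. rewrite !evalw_app, Heu. reflexivity. }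
    assert (Hlen' : length v' < len).
    { rewrite Hlen, Hvd. unfold v'. rewrite !length_app. lia. }
    destruct (ce_ker G E iota pi (T v') CE) as [n' Hn'].
    { rewrite HTpi. auto. }
    assert (Hn'le := IH _ Hlen' v' eq_refl Hv' Hev' n' Hn').
    destruct (ce_same_pi G E iota pi (T B) (T u) CE) as [m Hm].
    { rewrite !HTpi. auto. }
    assert (HmM : (m <= M)%Z).
    { apply (HM (B, u)); auto. apply in_prod.
      - apply words_in; auto. rewrite Hvd in Hv. apply Forall_app in Hv. destruct Hv as [_ HBC].
        apply Forall_app in HBC. tauto.
      - apply words_in; auto. lia. }
    assert (HTv : T v = iota (n' + m)%Z).
    { rewrite Hvd, !HTapp, Hm, (ce_add G E iota pi _ _ CE), <- Hn'. unfold v'. rewrite !HTapp.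
      rewrite <- !gmulA. f_equal. rewrite (ce_cen G E iota pi m (T Cc) CE). reflexivity. }
    unfold T in HTv. rewrite Hn in HTv. apply (ce_inj G E iota pi) in HTv; auto.
    subst n.
    assert (Z.of_nat (length v') <= Z.of_nat len - 1)%Z by lia.
    assert (Z.max 0 M * Z.of_nat (length v') <= Z.max 0 M * (Z.of_nat len - 1))%Z
      by (apply Z.mul_le_mono_nonneg_l; lia).
    lia.
Qed.

Lemma key (G E : Group) (iota : Z -> E) (pi : E -> G) (X : Type) (enumX : list X) (f : X -> E) :
  word_hyperbolic G -> central_extension iota pi -> (forall x : X, In x enumX) ->
  (forall e : E, exists w : list X, evalw f w = e) ->
  exists D, (0 <= D)%Z /\ forall u n, evalw f u = iota n -> (n <= D * Z.of_nat (length u))%Z.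
Proof.
  intros [S [delta [HS [Hsym [Hd H4]]]]] CE Hall Hgen.
  destruct (dehn G S delta HS Hsym Hd H4) as [K HK].
  assert (Htau_ex : forall g, exists w, pi (evalw f w) = g).
  { intro g. destruct CE as [_ [_ [_ [_ [Hsurj _]]]]]. destruct (Hsurj g) as [e He].
    destruct (Hgen e) as [w Hw]. exists w. rewrite Hw. auto. }
  set (tau := fun g => proj1_sig (constructive_indefinite_description _ (Htau_ex g))).
  assert (Htau : forall g, pi (evalw f (tau g)) = g).
  { intro g. unfold tau. destruct (constructive_indefinite_description _ _). auto. }
  destruct (stepB G E iota pi X f S K tau CE Htau HK) as [D [HD0 HD]].
  assert (Hsig_ex : forall x, exists l, Forall (fun s => In s S) l /\ evalw (fun s => s) l = pi (f x)).
  { intro x. apply HS. }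
  set (sigma := fun x => proj1_sig (constructive_indefinite_description _ (Hsig_ex x))).
  assert (Hsig : forall x, Forall (fun s => In s S) (sigma x) /\ evalw (fun s => s) (sigma x) = pi (f x)).
  { intro x. unfold sigma. destruct (constructive_indefinite_description _ _). auto. }
  set (T := fun w => evalw f (concat (map tau w))).
  assert (HTapp : forall a b, T (a ++ b) = gmul (T a) (T b)).
  { intros a b. unfold T. rewrite map_app, concat_app, evalw_app. reflexivity. }
  assert (HTpi : forall w, pi (T w) = evalw (fun s => s) w).
  { induction w as [|y w IH]; unfold T in *; simpl.
    - apply hom_one. apply (ce_hom G E iota pi CE).
    - rewrite evalw_app, (ce_hom G E iota pi CE), Htau, IH. reflexivity. }
  destruct (fin_bound _ enumX (fun x m => m = Z.of_nat (length (sigma x)))) as [Lx HLx].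
  { intros x _. exists (Z.of_nat (length (sigma x))). intros m ->. lia. }
  destruct (fin_bound _ enumX (fun x m => f x = gmul (T (sigma x)) (iota m))) as [Mx HMx].
  { intros x _. apply (ce_unique_bound G E iota pi (fun _ => True)); auto. }
  set (L0 := Z.max 0 Lx). set (M0 := Z.max 0 Mx).
  set (V := fun u : list X => concat (map sigma u)).
  assert (HV : forall u, Forall (fun s => In s S) (V u) /\
     evalw (fun s => s) (V u) = pi (evalw f u) /\
     (Z.of_nat (length (V u)) <= L0 * Z.of_nat (length u))%Z /\
     exists r, evalw f u = gmul (T (V u)) (iota r) /\ (r <= M0 * Z.of_nat (length u))%Z).
  { induction u as [|x u [IH1 [IH2 [IH3 [r [Hr1 Hr2]]]]]].
    - simpl. split; [constructor|]. split; [symmetry; apply hom_one; apply (ce_hom G E iota pi CE)|].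
      split; [lia|]. exists 0%Z. split; [|lia]. rewrite (ce_iota0 G E iota pi CE).
      unfold T, V. simpl. rewrite gmul1l. reflexivity.
    - destruct (Hsig x) as [Hs1 Hs2].
      assert (HVx : V (x :: u) = sigma x ++ V u) by reflexivity.
      rewrite HVx. split; [apply Forall_app; auto|].
      split. { rewrite evalw_app, IH2, Hs2. simpl. rewrite (ce_hom G E iota pi CE). reflexivity. }
      split. { rewrite length_app. simpl length.
               assert (Z.of_nat (length (sigma x)) <= Lx)%Z by (apply (HLx x); auto). lia. }
      destruct (ce_same_pi G E iota pi (f x) (T (sigma x)) CE) as [mx Hmx].
      { rewrite HTpi, Hs2. reflexivity. }
      assert (mx <= Mx)%Z by (apply (HMx x); auto).
      exists (mx + r)%Z. split; [|simpl length; lia].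
      simpl. rewrite Hr1, Hmx, HTapp, (ce_add G E iota pi _ _ CE), <- !gmulA. f_equal.
      rewrite !gmulA, (ce_cen G E iota pi mx (T (V u)) CE). reflexivity. }
  exists (D * L0 + M0)%Z. split; [lia|].
  assert (Hker : forall e, pi e = gone <-> exists n, e = iota n) by (destruct CE as [_ [_ [_ [_ [_ Hk]]]]]; exact Hk).
  intros u n Hn. destruct (HV u) as [H1 [H2 [H3 [r [Hr1 Hr2]]]]].
  destruct (ce_ker G E iota pi (T (V u)) CE) as [nT HnT].
  { rewrite HTpi, H2, Hn. apply Hker. eauto. }
  assert (HnTle := HD (V u) H1 (eq_trans H2 (eq_trans (f_equal pi Hn)
     (proj2 (Hker _) (ex_intro _ n eq_refl)))) nT HnT).
  rewrite HnT, <- (ce_add G E iota pi _ _ CE), Hn in Hr1.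
  apply (ce_inj G E iota pi) in Hr1; auto. subst n.
  assert (D * Z.of_nat (length (V u)) <= D * (L0 * Z.of_nat (length u)))%Z
    by (apply Z.mul_le_mono_nonneg_l; lia).
  rewrite Z.mul_add_distr_r, <- Z.mul_assoc. lia.
Qed.

Lemma div_le (a b c : R) : (0 < c)%R -> (a <= b * c)%R -> (a / c <= b)%R.
Proof.
  intros Hc H. apply (Rmult_le_reg_r c); auto. unfold Rdiv.
  rewrite Rmult_assoc, Rinv_l by lra. lra.
Qed.

Lemma ce_shift (G E : Group) (iota : Z -> E) (pi : E -> G) a m k :
  central_extension iota pi -> gmul (gmul a (iota m)) (iota k) = gmul a (iota (m + k)%Z).
Proof. intro CE. rewrite (ce_add G E iota pi _ _ CE), gmulA. reflexivity. Qed.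

Lemma ce_iota_inv (G E : Group) (iota : Z -> E) (pi : E -> G) m :
  central_extension iota pi -> ginv (iota m) = iota (- m)%Z.
Proof.
  intro CE. symmetry. apply ginv_unique. rewrite <- (ce_add G E iota pi _ _ CE).
  replace (m + - m)%Z with 0%Z by lia. apply (ce_iota0 G E iota pi CE).
Qed.

Lemma ce_fib (G E : Group) (iota : Z -> E) (pi : E -> G) a x y :
  central_extension iota pi ->
  (fibre_le iota (gmul a (iota x)) (gmul a (iota y)) <-> (x <= y)%Z).
Proof.
  intro CE.
  assert (Heq : gmul (gmul a (iota y)) (ginv (gmul a (iota x))) = iota (y - x)%Z).
  { rewrite ginv_mul, (ce_iota_inv G E iota pi _ CE), <- !gmulA, (gmulA E (iota y)),
      <- (ce_add G E iota pi _ _ CE), (ce_cen G E iota pi _ _ CE), gmulA, gmulVr, gmul1l.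
    reflexivity. }
  unfold fibre_le. rewrite Heq. split.
  - intros [n [Hn Hi]]. apply (ce_inj G E iota pi) in Hi; auto. lia.
  - intro H. exists (y - x)%Z. split; auto. lia.
Qed.

Theorem lemma2p1 (G E : Group) (iota : Z -> E) (pi : E -> G)
  (X : Type) (enumX : list X) (f : X -> E) :
  word_hyperbolic G ->
  central_extension iota pi ->
  (forall x : X, In x enumX) ->
  (forall x : X, exists y : X, f y = ginv (f x)) ->
  (forall e : E, exists w : list X, evalw f w = e) ->
  exists C : Z, (0 < C)%Z /\
    (forall g : G, exists w : list X, is_max_word f iota pi C g w) /\
    exists lambda : R, (0 < lambda)%R /\
      forall (g : G) (w : list X), is_max_word f iota pi C g w ->
        quasigeodesic_word f pi lambda w.
Proof.
  intros WH CE Hall Hinv Hgen.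
  destruct (key G E iota pi X enumX f WH CE Hall Hgen) as [D [HD0 HD]].
  assert (Hpi := ce_hom G E iota pi CE).
  set (hinv := fun x => proj1_sig (constructive_indefinite_description _ (Hinv x))).
  assert (Hh : forall x, f (hinv x) = ginv (f x)).
  { intro x. unfold hinv. destruct (constructive_indefinite_description _ _). auto. }
  set (invw := fun u : list X => rev (map hinv u)).
  assert (Hinvw : forall u, evalw f (invw u) = ginv (evalw f u)).
  { intro u. apply evalw_rev_inv. auto. }
  assert (Hinvl : forall u, length (invw u) = length u).
  { intro u. unfold invw. rewrite length_rev, length_map. auto. }
  assert (Hdiff : forall w w' m, evalw f w = gmul (evalw f w') (iota m) ->
             (m <= D * (Z.of_nat (length w) + Z.of_nat (length w')))%Z).
  { intros w w' m Hm.
    assert (H1 : evalw f (invw w' ++ w) = iota m).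
    { rewrite evalw_app, Hinvw, Hm, gmulA, gmulVl, gmul1l. reflexivity. }
    specialize (HD _ _ H1). rewrite length_app, Hinvl in HD. lia. }
  exists (D + 1)%Z. split; [lia|]. split.
  - intro g.
    assert (Hsurj : forall g, exists e, pi e = g) by (destruct CE as [_ [_ [_ [_ [Hs _]]]]]; exact Hs).
    destruct (Hsurj g) as [e0 He0]. destruct (Hgen e0) as [w0 Hw0]. subst e0.
    set (P := fun z => exists w, pi (evalw f w) = g /\
                 shifted_value f iota (D + 1) w = gmul (evalw f w0) (iota z)).
    assert (HP : forall w, pi (evalw f w) = g -> exists z, shifted_value f iota (D + 1) w = gmul (evalw f w0) (iota z) /\ (z <= D * Z.of_nat (length w0))%Z).
    { intros w Hw. destruct (ce_same_pi G E iota pi (evalw f w) (evalw f w0) CE) as [m Hm].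
      { congruence. }
      assert (Hmle := Hdiff _ _ _ Hm).
      exists (m + - (D + 1) * Z.of_nat (length w))%Z. split.
      - unfold shifted_value. rewrite Hm, (ce_shift G E iota pi _ _ _ CE).
        reflexivity.
      - lia. }
    destruct (Z_max P (D * Z.of_nat (length w0))) as [z [[w [Hw Hwz]] Hzmax]].
    { exists (- (D + 1) * Z.of_nat (length w0))%Z, w0. split; auto. }
    { intros z [w [Hw Hwz]]. destruct (HP w Hw) as [z' [Hwz' Hz']].
      rewrite Hwz in Hwz'. apply gcancel_l in Hwz'. apply (ce_inj G E iota pi) in Hwz'; auto. lia. }
    exists w. split; auto. intros w' Hw'. destruct (HP w' Hw') as [z' [Hwz' _]].
    assert (z' <= z)%Z by (apply Hzmax; exists w'; auto).
    rewrite Hwz, Hwz'. apply (ce_fib G E iota pi); auto.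
  - exists (IZR (2 * D + 1)). split; [apply IZR_lt; lia|].
    intros g w [Hw Hmax].
    assert (Hcore : forall s t u, s <= t -> t <= length w ->
        pi (evalw f u) = gmul (ginv (pi (evalw f (firstn s w)))) (pi (evalw f (firstn t w))) ->
        (Z.of_nat (t - s) <= (2 * D + 1) * Z.of_nat (length u))%Z).
    { intros s t u Hst Htw Hu.
      destruct (decomp X w s t Hst Htw) as [Hwd [HA [HB Hft]]].
      rewrite Hft in Hu.
      set (A := firstn s w) in *. set (B := firstn (t - s) (skipn s w)) in *.
      set (Cc := skipn (t - s) (skipn s w)) in *.
      assert (HuB : pi (evalw f u) = pi (evalw f B)).
      { rewrite Hu, evalw_app, Hpi, gmulA, gmulVl, gmul1l. reflexivity. }
      destruct (ce_same_pi G E iota pi (evalw f B) (evalw f u) CE) as [m Hm]; [auto|].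
      assert (Hmle := Hdiff _ _ _ Hm).
      set (w' := A ++ u ++ Cc).
      assert (Hw' : pi (evalw f w') = g).
      { rewrite <- Hw, Hwd. unfold w'. rewrite !evalw_app, !Hpi, HuB. reflexivity. }
      specialize (Hmax w' Hw').
      assert (Hew : evalw f w = gmul (evalw f w') (iota m)).
      { rewrite Hwd at 1. unfold w'. rewrite !evalw_app, Hm, <- !gmulA. f_equal. f_equal.
        apply (ce_cen G E iota pi _ _ CE). }
      assert (Hlw : length w = length A + length B + length Cc).
      { rewrite Hwd at 1. rewrite !length_app. lia. }
      assert (Hlw' : length w' = length A + length u + length Cc).
      { unfold w'. rewrite !length_app. lia. }
      unfold shifted_value in Hmax. rewrite Hew, (ce_shift G E iota pi _ _ _ CE) in Hmax.
      apply (ce_fib G E iota pi) in Hmax; auto.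
      rewrite Hlw, Hlw', HB in Hmax. rewrite HB in Hmle.
      rewrite !Nat2Z.inj_add in Hmax. nia. }
    unfold quasigeodesic_word. cbv zeta beta. intros s t Hs Ht.
    destruct (le_lt_dec s t) as [Hst|Hts].
    + replace (Nat.max s t - Nat.min s t) with (t - s) by lia. split.
      * intros u Hu. apply div_le; [apply IZR_lt; lia|].
        specialize (Hcore s t u Hst Ht Hu). rewrite !INR_IZR_INZ, <- mult_IZR. apply IZR_le. lia.
      * destruct (sub_word E X f w s t Hst Ht) as [B [_ [HBl HBe]]]. exists B. split.
        { rewrite HBe, Hpi, hom_inv; auto. }
        rewrite HBl, !INR_IZR_INZ, <- mult_IZR. apply IZR_le. nia.
    + replace (Nat.max s t - Nat.min s t) with (s - t) by lia. split.
      * intros u Hu. apply div_le; [apply IZR_lt; lia|].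
        assert (Hu' : pi (evalw f (invw u)) =
                      gmul (ginv (pi (evalw f (firstn t w)))) (pi (evalw f (firstn s w)))).
        { rewrite Hinvw, hom_inv, Hu, ginv_mul, ginv_inv; auto. }
        specialize (Hcore t s (invw u) ltac:(lia) Hs Hu'). rewrite Hinvl in Hcore.
        rewrite !INR_IZR_INZ, <- mult_IZR. apply IZR_le. lia.
      * destruct (sub_word E X f w t s ltac:(lia) Hs) as [B [_ [HBl HBe]]]. exists (invw B). split.
        { rewrite Hinvw, HBe, ginv_mul, ginv_inv, Hpi, hom_inv; auto. }
        rewrite Hinvl, HBl, !INR_IZR_INZ, <- mult_IZR. apply IZR_le. nia.
Qed.
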